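(* There is an absolute constant $c>0$ such that the following holds. Let $0<\varepsilon\le1$ and $1\le m\le n^{3/2-\varepsilon}$. If $\alpha\in\mathcal L$ is neither trivial nor a spider, then \[\frac{1}{n^{|E(\alpha)|/2}}\cdot n^{\frac{w(V(\alpha))-w(S_{\min})}{2}}\ \le\ \frac{1}{n^{c\,\varepsilon\,|E(\alpha)|}},\] where $S_{\min}$ is a minimum vertex separator of $\alpha$.
   Context: A shape $\alpha=(V(\alpha),E(\alpha),U_\alpha,V_\alpha)$ consists of a finite vertex set $V(\alpha)$, each vertex typed as a ''circle'' or a ''square''; a collection $E(\alpha)$ of edges, each joining a circle and a square and carrying a positive integer label; and two subsets $U_\alpha,V_\alpha\subseteq V(\alpha)$ (possibly intersecting). $W_\alpha=V(\alpha)\setminus(U_\alpha\cup V_\alpha)$. The shape is proper if it has no parallel edges. The degree $\deg(x)$ of a vertex is the sum of labels of incident edges, and $|E(\alpha)|$ denotes the sum of all edge labels. A shape is trivial if $U_\alpha=V_\alpha$, $W_\alpha=\emptyset$ and $E(\alpha)=\emptyset$. A left spider is a proper shape having two distinct squares $i,j\in U_\alpha$ of degree $1$ both adjacent to a common circle; a right spider is the same with $V_\alpha$ in place of $U_\alpha$; a spider is a left or right spider. For $S\subseteq V(\alpha)$, $w(S)=(\#\text{circles in }S)\log_n m+(\#\text{squares in }S)$. A vertex separator is a set $S\subseteq V(\alpha)$ such that every path from a vertex of $U_\alpha$ to a vertex of $V_\alpha$ (including length-zero paths, so $U_\alpha\cap V_\alpha\subseteq S$) contains a vertex of $S$; a minimum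 vertex separator minimizes $w$. $\mathcal L$ (depending on parameters $\delta,\tau>0$) is the set of proper shapes $\alpha$ such that: $U_\alpha,V_\alpha$ contain only squares and $|U_\alpha|,|V_\alpha|\le n^\delta$; $W_\alpha$ has no vertices of degree $0$; for every square $i$, $\deg(i)+\mathbf 1[i\in U_\alpha]+\mathbf 1[i\in V_\alpha]$ is even; every circle has even degree at least $4$; and $|E(\alpha)|\le n^\tau$. *)

(* Defs.v *)
From Stdlib Require Import Reals.
From mathcomp Require Import all_boot.
Set Implicit Arguments. Unset Strict Implicit. Unset Printing Implicit Defensive.

(* A shape on the finite vertex type V (V(alpha) is the whole of V).
   circ x = true means x is a circle, false means x is a square.
   edges: a list (multiset) of edges ((circle, square), label). *)
Record ashape (V : finType) := Shape {
  circ : V -> bool;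
  edges : seq (V * V * nat);
  Uset : {set V};
  Vset : {set V} }.

Section Shapes.
Variable V : finType.
Implicit Types (a : ashape V) (S : {set V}) (x y : V).

Definition shape_wf a : Prop :=
  forall e, e \in edges a -> [/\ circ a e.1.1, ~~ circ a e.1.2 & 0 < e.2]%N.

Definition Wset a : {set V} := ~: (Uset a :|: Vset a).

Definition proper a : bool := uniq [seq e.1 | e <- edges a].

Definition incident x (e : V * V * nat) : bool := (e.1.1 == x) || (e.1.2 == x).

Definition deg a x : nat := sumn [seq e.2 | e <- edges a & incident x e].

Definition total_E a : nat := sumn [seq e.2 | e <- edges a].

Definition adj a x y : bool :=
  has (fun e : V * V * nat => ((e.1.1 == x) && (e.1.2 == y)) || ((e.1.1 == y) && (e.1.2 == x)))
      (edges a).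

Definition trivial_shape a : Prop :=
  Uset a = Vset a /\ Wset a = set0 /\ edges a = [::].

Definition left_spider a : Prop :=
  proper a /\ exists i j c, [/\ i != j, i \in Uset a, j \in Uset a,
    ~~ circ a i & ~~ circ a j] /\ [/\ deg a i = 1%N, deg a j = 1%N, circ a c,
    adj a i c & adj a j c].

Definition right_spider a : Prop :=
  proper a /\ exists i j c, [/\ i != j, i \in Vset a, j \in Vset a,
    ~~ circ a i & ~~ circ a j] /\ [/\ deg a i = 1%N, deg a j = 1%N, circ a c,
    adj a i c & adj a j c].

Definition spider a : Prop := left_spider a \/ right_spider a.

Definition weight (n m : nat) a S : R :=
  INR #|[set x in S | circ a x]| * (ln (INR m) / ln (INR n))
  + INR #|[set x in S | ~~ circ a x]|.

Definition vertex_separator a S : Prop :=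
  forall (u : V) (p : seq V), u \in Uset a -> last u p \in Vset a ->
    path (adj a) u p -> exists2 x, x \in u :: p & x \in S.

Definition min_vertex_separator (n m : nat) a S : Prop :=
  vertex_separator a S /\
  forall S', vertex_separator a S' -> Rle (weight n m a S) (weight n m a S').

Definition in_L (n : nat) (delta tau : R) a : Prop :=
  shape_wf a /\ [/\ proper a,
      (forall x, x \in Uset a :|: Vset a -> ~~ circ a x),
      Rle (INR #|Uset a|) (Rpower (INR n) delta) /\ Rle (INR #|Vset a|) (Rpower (INR n) delta),
      (forall x, x \in Wset a -> deg a x <> 0%N) &
      [/\ (forall x, ~~ circ a x ->
             ~~ odd (deg a x + (x \in Uset a) + (x \in Vset a))),
          (forall x, circ a x -> ~~ odd (deg a x) /\ (4 <= deg a x)%N) &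
          Rle (INR (total_E a)) (Rpower (INR n) tau)]].

End Shapes.

(* Main.v *)
Require Import Defs.
From Stdlib Require Import Reals Lra Psatz.
From mathcomp Require Import all_boot.
Set Implicit Arguments. Unset Strict Implicit. Unset Printing Implicit Defensive.

Lemma sum_deg (V : finType) (a : ashape V) (P : pred V) :
  \sum_(x | P x) deg a x = \sum_(e <- edges a) e.2 * #|[set x | P x & incident x e]|.
Proof.
rewrite /deg.
under eq_bigr => x _ do rewrite sumnE big_map big_filter big_mkcond.
rewrite exchange_big /=; apply: eq_bigr => e _.
rewrite -big_mkcondr sum_nat_const mulnC; congr (_ * _).
by apply: eq_card => x; rewrite !inE.
Qed.

Lemma sum_deg_circ (V : finType) (a : ashape V) : shape_wf a ->
  \sum_(x | circ a x) deg a x = total_E a.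
Proof.
move=> wf; rewrite sum_deg /total_E sumnE big_map big_seq [RHS]big_seq.
apply: eq_bigr => e he; have [c1 c2 _] := wf e he.
suff -> : [set x | circ a x & incident x e] = [set e.1.1] by rewrite cards1 muln1.
apply/setP => x; rewrite !inE /incident.
case: (eqVneq x e.1.1) => [->|nx]; first by rewrite c1 ?eqxx.
case: (eqVneq x e.1.2) => [->|]; last by rewrite andbF.
by rewrite (negbTE c2).
Qed.

Lemma sum_deg_sq (V : finType) (a : ashape V) : shape_wf a ->
  \sum_(x | ~~ circ a x) deg a x = total_E a.
Proof.
move=> wf; rewrite sum_deg /total_E sumnE big_map big_seq [RHS]big_seq.
apply: eq_bigr => e he; have [c1 c2 _] := wf e he.
suff -> : [set x | ~~ circ a x & incident x e] = [set e.1.2] by rewrite cards1 muln1.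
apply/setP => x; rewrite !inE /incident.
case: (eqVneq x e.1.2) => [->|nx]; first by rewrite c2 ?eqxx ?orbT.
case: (eqVneq x e.1.1) => [->|]; last by rewrite andbF.
by rewrite c1.
Qed.

Lemma at_most_one (V : finType) (Q : pred V) :
  (forall x y, Q x -> Q y -> x = y) -> \sum_x (Q x : nat) <= 1.
Proof.
move=> H; case: (pickP Q) => [d0 Hd0|H0].
  rewrite (bigD1 d0) //= Hd0 big1 // => x nx.
  by case Qx: (Q x) => //; rewrite (H x d0 Qx Hd0) eqxx in nx.
by rewrite big1 // => x _; rewrite H0.
Qed.

Lemma adjC (V : finType) (a : ashape V) x y : adj a x y = adj a y x.
Proof. by apply: eq_has => e; rewrite orbC. Qed.

Lemma card_ind (V : finType) (p : pred V) : #|[set x | p x]| = \sum_x (p x : nat).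
Proof. by rewrite -sum1_card big_mkcond /=; apply: eq_bigr => x _; rewrite inE; case: (p x). Qed.

Lemma neighbor (V : finType) (a : ashape V) d : shape_wf a -> ~~ circ a d -> deg a d = 1 ->
  exists c, circ a c && adj a d c.
Proof.
move=> wf sd; rewrite /deg; case E: [seq e <- edges a | incident d e] => [|e s] //= _.
have : e \in [seq e <- edges a | incident d e] by rewrite E mem_head.
rewrite mem_filter => /andP[inc he]; have [c1 c2 _] := wf e he.
move: inc; rewrite /incident; case: (eqVneq e.1.1 d) => [ed|_] /=.
  by rewrite -ed c1 in sd.
move=> /eqP ed; exists e.1.1; rewrite c1 /=; apply/hasP; exists e => //.
by rewrite ed !eqxx orbT.
Qed.

Lemma sep_in (V : finType) (a : ashape V) S x : vertex_separator a S ->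
  x \in Uset a -> x \in Vset a -> x \in S.
Proof.
move=> sep xu xv; have [y] := sep x [::] xu xv erefl.
by rewrite inE => /eqP ->.
Qed.

Lemma sep_UV (V : finType) (a : ashape V) S d d' c : vertex_separator a S ->
  d \in Uset a -> d' \in Vset a -> d \notin S -> d' \notin S -> adj a d c -> adj a d' c ->
  c \in S.
Proof.
move=> sep du dv nd nd' h1 h2.
have hp : path (adj a) d [:: c; d'] by rewrite /= h1 adjC h2.
have [y] := sep d [:: c; d'] du dv hp.
by rewrite !inE => /or3P[] /eqP -> // H; rewrite H in nd nd'.
Qed.

Lemma comb (V : finType) (a : ashape V) n delta tau S :
  in_L n delta tau a -> ~ spider a -> vertex_separator a S ->
  (#|[set x in ~:S | ~~ circ a x]|).*2 <= total_E a + #|[set x in ~:S | circ a x]| + (#|[set x in S | circ a x]|).*2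
  /\ 4 * (#|[set x in ~:S | circ a x]| + #|[set x in S | circ a x]|) <= total_E a.
Proof.
move=> [wf [pr sqUV _ Wnz [par circd _]]] nsp sep.
pose D := fun x => ~~ circ a x && (x \notin S) && (deg a x == 1).
have DUV : forall d, D d -> d \notin Uset a -> d \in Vset a.
  move=> d /andP[/andP[sd nS] /eqP d1] nU; move: (par d sd); rewrite d1 (negbTE nU).
  by case: (d \in Vset a).
have uniqU : forall d d' c, D d -> D d' -> d \in Uset a -> d' \in Uset a -> circ a c ->
    adj a d c -> adj a d' c -> d = d'.
  move=> d d' c /andP[/andP[sd _] /eqP d1] /andP[/andP[sd' _] /eqP d1'] du du' cc h h'.
  apply/eqP; apply: contraT => ne; exfalso; apply: nsp; left; split => //.
  by exists d, d', c; split; split.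
have uniqV : forall d d' c, D d -> D d' -> d \in Vset a -> d' \in Vset a -> circ a c ->
    adj a d c -> adj a d' c -> d = d'.
  move=> d d' c /andP[/andP[sd _] /eqP d1] /andP[/andP[sd' _] /eqP d1'] du du' cc h h'.
  apply/eqP; apply: contraT => ne; exfalso; apply: nsp; right; split => //.
  by exists d, d', c; split; split.
have hA : (\sum_x ((x \in ~:S) && ~~ circ a x : nat)).*2 <= total_E a + \sum_x (D x : nat).
  rewrite -(sum_deg_sq wf) -addnn -big_split [X in _ <= X + _]big_mkcond -big_split /=; apply: leq_sum => x _.
  rewrite inE; case cx: (circ a x) => //=; case xS: (x \in S) => //=.
  have hd : deg a x != 0.
    apply/eqP => d0; move: (par x (negbT cx)); rewrite d0.
    case hu: (x \in Uset a); case hv: (x \in Vset a) => //.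
      by rewrite (sep_in sep hu hv) in xS.
    by move=> _; apply: (Wnz x _ d0); rewrite /Wset !inE hu hv.
  rewrite /D cx xS /=; move: hd; case: (deg a x) => [|[|k]] //.
have hB : \sum_x (D x : nat) <= \sum_x ((x \in ~:S) && circ a x : nat) + (\sum_x ((x \in S) && circ a x : nat)).*2.
  apply: (@leq_trans (\sum_d \sum_c ((D d && circ a c && adj a d c) : nat))).
    apply: leq_sum => d _; case Dd: (D d) => //.
    move: (Dd) => /andP[/andP[sd nS] /eqP d1].
    have [c /andP[cc adc]] := neighbor wf sd d1.
    by rewrite (bigD1 c) //= cc adc.
  rewrite exchange_big /= -addnn -!big_split /=; apply: leq_sum => c _.
  rewrite inE; case cc: (circ a c); last by rewrite big1 // => d _; rewrite andbF.
  under eq_bigr => d _ do rewrite andbT; case cS: (c \in S) => /=.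
    rewrite (eq_bigr (fun d => (D d && adj a d c && (d \in Uset a) : nat) + (D d && adj a d c && (d \notin Uset a)))); last first.
      by move=> d _; case: (D d && adj a d c); case: (d \in Uset a).
    rewrite big_split /=; rewrite add0n; apply: leq_add; apply: at_most_one.
      move=> d d' /andP[/andP[Dd h] du] /andP[/andP[Dd' h'] du'].
      exact: (uniqU d d' c).
    move=> d d' /andP[/andP[Dd h] du] /andP[/andP[Dd' h'] du'].
    exact: (uniqV d d' c Dd Dd' (DUV d Dd du) (DUV d' Dd' du')).
  rewrite !addn0; apply: at_most_one => d d' /andP[Dd h] /andP[Dd' h'].
  have nd : d \notin S by case/andP: Dd => /andP[].
  have nd' : d' \notin S by case/andP: Dd' => /andP[].
  case du: (d \in Uset a); case du': (d' \in Uset a).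
  - exact: (uniqU d d' c).
  - by rewrite (sep_UV sep du (DUV d' Dd' (negbT du')) nd nd' h h') in cS.
  - by rewrite (sep_UV sep du' (DUV d Dd (negbT du)) nd' nd h' h) in cS.
  - exact: (uniqV d d' c Dd Dd' (DUV d Dd (negbT du)) (DUV d' Dd' (negbT du'))).
rewrite !card_ind; split.
  by rewrite -addnA; apply: (leq_trans hA); rewrite leq_add2l.
rewrite -(sum_deg_circ wf) -big_split big_distrr [X in _ <= X]big_mkcond /=; apply: leq_sum => x _.
rewrite inE; case cx: (circ a x); last by case: (x \in S).
by case: (x \in S) => /=; rewrite muln1 ?addn0 ?add0n; case: (circd x cx).
Qed.
Unset Implicit Arguments.

Lemma ln_le' (x y : R) : Rlt 0 x -> Rle x y -> Rle (ln x) (ln y).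
Proof.
intros hx hxy; destruct (Rle_lt_or_eq_dec _ _ hxy) as [h|h].
- left; apply ln_increasing; auto.
- subst; right; reflexivity.
Qed.

Lemma card_split (V : finType) (S : {set V}) (p : pred V) :
  #|[set x in setT | p x]| = (#|[set x in S | p x]| + #|[set x in ~:S | p x]|)%N.
Proof.
rewrite !card_ind -big_split /=; apply: eq_bigr => x _.
by rewrite !inE; case: (x \in S); case: (p x).
Qed.

Local Open Scope R_scope.
Lemma INR_add a b : INR (a + b)%N = INR a + INR b.
Proof. exact: plus_INR. Qed.

Lemma INR_leq a b : (a <= b)%N -> INR a <= INR b.
Proof. by move/leP; apply: le_INR. Qed.

Theorem lemma5p2 :
  exists c : R, Rlt 0 c /\
  forall (eps : R) (n m : nat) (delta tau : R),
    Rlt 0 eps -> Rle eps 1 -> (1 < n)%N -> (1 <= m)%N ->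
    Rle (INR m) (Rpower (INR n) (Rminus (Rdiv 3 2) eps)) ->
    Rlt 0 delta -> Rlt 0 tau ->
    forall (V : finType) (a : ashape V) (Smin : {set V}),
      in_L n delta tau a -> ~ trivial_shape a -> ~ spider a ->
      min_vertex_separator n m a Smin ->
      Rle
        (Rmult (Rinv (Rpower (INR n) (Rdiv (INR (total_E a)) 2)))
               (Rpower (INR n)
                  (Rdiv (Rminus (weight n m a setT) (weight n m a Smin)) 2)))
        (Rinv (Rpower (INR n) (Rmult (Rmult c eps) (INR (total_E a))))).
Proof.
exists (1/8); split; first lra.
move=> eps n m delta tau he0 he1 hn hm hmn _ _ V a S HL _ nsp [sep _].
have [hA hB] := comb HL nsp sep.
have hn1 : 1 < INR n by exact: (lt_INR 1 n (ltP hn)).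
have hm1 : 1 <= INR m by exact: (@INR_leq 1 m hm).
have lnn : 0 < ln (INR n) by rewrite -ln_1; apply: ln_increasing; lra.
have lnm0 : 0 <= ln (INR m) by rewrite -ln_1; apply: ln_le'; lra.
have lnm1 : ln (INR m) <= (3/2 - eps) * ln (INR n).
  by rewrite -ln_Rpower; apply: ln_le'; lra.
set L := ln (INR m) / ln (INR n).
have hL : L * ln (INR n) = ln (INR m) by rewrite /L; field; lra.
have L0 : 0 <= L by nra.
have L1 : L <= 3/2 - eps by nra.
have hdiff : weight n m a setT - weight n m a S =
   INR #|[set x in ~:S | circ a x]| * L + INR #|[set x in ~:S | ~~ circ a x]|.
  rewrite /weight -/L (@card_split _ S) (@card_split _ S (fun x => ~~ circ a x)) !INR_add; ring.
rewrite hdiff -Rpower_Ropp -Rpower_plus -Rpower_Ropp; apply: Rle_Rpower; first lra.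
move: hA hB; set Co := #|[set x in ~:S | circ a x]|; set Ci := #|[set x in S | circ a x]|;
  set Q := #|[set x in ~:S | ~~ circ a x]|; set E := total_E a => hA hB.
have rA : 2 * INR Q <= INR E + INR Co + 2 * INR Ci.
  have := @INR_leq _ _ hA; rewrite -!muln2 !INR_add !mult_INR /=; lra.
have rB : 4 * (INR Co + INR Ci) <= INR E.
  have := @INR_leq _ _ hB; rewrite !mult_INR INR_add /=; lra.
have p0 : 0 <= INR Co by apply: pos_INR.
have p1 : 0 <= INR Ci by apply: pos_INR.
have q1 : INR Co * L <= INR Co * (3/2 - eps) by apply: Rmult_le_compat_l.
have q2 : 0 <= (2 - eps) * (INR E - 4 * (INR Co + INR Ci)) by apply: Rmult_le_pos; lra.
have q3 : 0 <= INR Ci * (1 - eps) by apply: Rmult_le_pos; lra.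
nra.
Qed.
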